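(* Let $\alpha$ be a nonzero real number and let $\gamma(t)=\Psi(u(t),v(t))$, $t\in[a,b]$, be a regular curve in $\mathbb H^2$ not passing through $N$. Then $\gamma$ is an $\alpha$-stationary curve if and only if $$\kappa=-\alpha\,\frac{v'\sinh u}{u\,|\gamma'|_\epsilon}.$$
   Context: Let $\langle x,y\rangle_\epsilon=x_1y_1+x_2y_2-x_3y_3$ be the Lorentzian inner product on $\mathbb R^3$ and $|x|_\epsilon=\sqrt{|\langle x,x\rangle_\epsilon|}$. The hyperbolic plane is $\mathbb H^2=\{(x,y,z):x^2+y^2-z^2=-1,\ z>0\}$ with the induced metric. It is parametrized by $\Psi(u,v)=(\sinh u\cos v,\sinh u\sin v,\cosh u)$. Let $N=(0,0,1)$. The hyperbolic distance from $\Psi(u,v)$ ($u\ge 0$) to $N$ is $u$. For a regular curve $\gamma(t)=\Psi(u(t),v(t))$ with $u>0$, we have $|\gamma'|_\epsilon=\sqrt{u'^2+\sinh^2(u)v'^2}$. Its unit normal is $$\mathbf n=\frac{1}{|\gamma'|_\epsilon}\big(u'\sin v+\sinh u\cosh u\,v'\cos v,\ \sinh u\cosh u\,v'\sin v-u'\cos v,\ \sinh^2(u)\,v'\big).$$ Its curvature is $$\kappa=\frac{\langle\gamma'',\mathbf n\rangle_\epsilon}{|\gamma'|_\epsilon^2}=\frac{v'\cosh u\,(2u'^2+v'^2\sinh^2u)+\sinh u\,(u'v''-u''v')}{|\gamma'|_\epsilon^3}.$$ For $\alpha\in\mathbb R$, the energy of $\gamma$ is $$E_\alpha[\gamma]=\int_\gamma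 \mathsf d^\alpha\,ds=\int_a^b u^\alpha\sqrt{u'^2+\sinh^2(u)v'^2}\,dt,$$ where $\mathsf d$ is the hyperbolic distance to $N$. A curve is called $\alpha$-stationary if it is a critical point of $E_\alpha$, i.e. $(u,v)$ satisfies the Euler–Lagrange equations of this functional. Throughout the paper, $\alpha\neq0$ and curves are assumed not to pass through $N$. *)

(* Defs.v *)
From Stdlib Require Import Reals.
From Coquelicot Require Import Coquelicot.
Open Scope R_scope.

(* A curve gamma(t) = Psi(u t, v t) in H^2 given by its coordinate functions u, v. *)

Definition der1 (f : R -> R) : R -> R := Derive f.
Definition der2 (f : R -> R) : R -> R := Derive (Derive f).

Definition speed (u v : R -> R) (t : R) : R :=
  sqrt (der1 u t ^ 2 + sinh (u t) ^ 2 * der1 v t ^ 2).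

(* curvature kappa, by the explicit formula of the paper *)
Definition curvature (u v : R -> R) (t : R) : R :=
  (der1 v t * cosh (u t) * (2 * der1 u t ^ 2 + der1 v t ^ 2 * sinh (u t) ^ 2)
   + sinh (u t) * (der1 u t * der2 v t - der2 u t * der1 v t)) / speed u v t ^ 3.

(* Lagrangian L(u,v,u',v') = u^alpha sqrt(u'^2 + sinh^2(u) v'^2) (u > 0).
   Partial derivatives along the curve: *)
Definition dL_du' (alpha : R) (u v : R -> R) (t : R) : R :=
  Rpower (u t) alpha * der1 u t / speed u v t.
Definition dL_dv' (alpha : R) (u v : R -> R) (t : R) : R :=
  Rpower (u t) alpha * sinh (u t) ^ 2 * der1 v t / speed u v t.
Definition dL_du (alpha : R) (u v : R -> R) (t : R) : R :=
  alpha * Rpower (u t) (alpha - 1) * speed u v t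
  + Rpower (u t) alpha * sinh (u t) * cosh (u t) * der1 v t ^ 2 / speed u v t.
(* dL/dv = 0 *)

(* alpha-stationary: the Euler-Lagrange equations of E_alpha hold on [a,b]:
   d/dt (dL/du') = dL/du  and  d/dt (dL/dv') = dL/dv = 0. *)
Definition alpha_stationary (alpha : R) (u v : R -> R) (a b : R) : Prop :=
  forall t, a <= t <= b ->
    is_derive (dL_du' alpha u v) t (dL_du alpha u v t) /\
    is_derive (dL_dv' alpha u v) t 0.

(* Main.v *)
Require Import Defs.
From Stdlib Require Import Reals Lra.
From Coquelicot Require Import Coquelicot.
Open Scope R_scope.

Lemma alg1 alpha p u A A2 B B2 S C s :
  s <> 0 -> u <> 0 -> s^2 = A^2 + S^2*B^2 ->
  let sd := (A*A2 + S*C*A*B^2 + S^2*B*B2)/s in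
  let K := (B*C*(2*A^2+B^2*S^2) + S*(A*B2 - A2*B))/s^3 - (-alpha*(B*S)/(u*s)) in
  ((alpha*p/u*A*A + p*A2) * s - p*A*sd)/s^2 - (alpha*(p/u)*s + p*S*C*B^2/s) = - p*S*B*K
  /\ ((alpha*p/u*A*S^2*B + p*(2*S*C*A)*B + p*S^2*B2) * s - p*S^2*B*sd)/s^2 = p*S*A*K.
Proof.
intros Hs Hu Hg sd K; unfold sd, K; split; field_simplify_eq; auto;
 try replace (s^4) with ((s^2)^2) by ring; rewrite ?Hg; ring.
Qed.

Lemma isd_eq (f : R -> R) (x l l' : R) : is_derive f x l -> l = l' -> is_derive f x l'.
Proof. intros H ->; exact H. Qed.

Lemma isd_mult (f g : R -> R) (x df dg : R) :
  is_derive f x df -> is_derive g x dg ->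
  is_derive (fun t => f t * g t) x (df * g x + f x * dg).
Proof.
  intros Hf Hg. apply (is_derive_mult f g x df dg Hf Hg). intros; apply Rmult_comm.
Qed.

Lemma isd_plus (f g : R -> R) (x df dg : R) :
  is_derive f x df -> is_derive g x dg ->
  is_derive (fun t => f t + g t) x (df + dg).
Proof. intros Hf Hg. exact (is_derive_plus f g x df dg Hf Hg). Qed.

Lemma isd_comp (f g : R -> R) (x df dg : R) :
  is_derive f (g x) df -> is_derive g x dg ->
  is_derive (fun t => f (g t)) x (dg * df).
Proof. intros Hf Hg. exact (is_derive_comp f g x df dg Hf Hg). Qed.

Theorem proposition2p1 (alpha a b : R) (u v : R -> R) :
  alpha <> 0 ->
  a < b ->
  (* u, v are twice differentiable *)
  (forall t, ex_derive u t /\ ex_derive (Derive u) t) ->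
  (forall t, ex_derive v t /\ ex_derive (Derive v) t) ->
  (* the curve does not pass through N *)
  (forall t, a <= t <= b -> 0 < u t) ->
  (* the curve is regular *)
  (forall t, a <= t <= b -> 0 < speed u v t) ->
  (alpha_stationary alpha u v a b <->
   forall t, a <= t <= b ->
     curvature u v t = - alpha * (der1 v t * sinh (u t)) / (u t * speed u v t)).
Proof.
  intros Hal Hab Hu2 Hv2 Hupos Hspos.
  assert (Key : forall t, a <= t <= b ->
    ((is_derive (dL_du' alpha u v) t (dL_du alpha u v t) /\
      is_derive (dL_dv' alpha u v) t 0) <->
     curvature u v t = - alpha * (der1 v t * sinh (u t)) / (u t * speed u v t))).
  { intros t Ht.
    specialize (Hupos t Ht); specialize (Hspos t Ht).
    destruct (Hu2 t) as [Hu Hu'], (Hv2 t) as [Hv Hv'].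
    apply Derive_correct in Hu, Hu', Hv, Hv'.
    set (A := Derive u t) in *. set (A2 := Derive (Derive u) t) in *.
    set (B := Derive v t) in *. set (B2 := Derive (Derive v) t) in *.
    set (S := sinh (u t)). set (C := cosh (u t)).
    set (p := Rpower (u t) alpha).
    set (s := speed u v t) in *.
    assert (Hp0 : 0 < p) by (unfold p, Rpower; apply exp_pos).
    assert (HS0 : 0 < S) by (unfold S; rewrite <- sinh_0; apply sinh_lt; lra).
    assert (Hpm : Rpower (u t) (alpha - 1) = p / u t).
    { unfold Rminus. rewrite Rpower_plus, Rpower_Ropp, Rpower_1 by lra. reflexivity. }
    assert (Hg : s^2 = A^2 + S^2*B^2).
    { unfold s, speed, der1. rewrite pow2_sqrt. reflexivity.
      apply Rplus_le_le_0_compat; [apply pow2_ge_0|].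
      apply Rmult_le_pos; apply pow2_ge_0. }
    assert (Hdp : is_derive (fun x => Rpower (u x) alpha) t (alpha * p / u t * A)).
    { eapply isd_eq. apply (isd_comp (fun y => Rpower y alpha) u).
      apply is_derive_Reals, derivable_pt_lim_power; exact Hupos. exact Hu.
      rewrite Hpm. unfold p. field. lra. }
    assert (HdS : is_derive (fun x => sinh (u x)) t (C * A)).
    { eapply isd_eq. apply (isd_comp sinh u).
      apply is_derive_Reals, derivable_pt_lim_sinh. exact Hu.
      unfold C; ring. }
    assert (HdS2 : is_derive (fun x => sinh (u x) ^ 2) t (2 * S * C * A)).
    { eapply isd_eq. apply is_derive_pow, HdS. simpl. unfold S; ring. }
    set (sd := (A*A2 + S*C*A*B^2 + S^2*B*B2)/s).
    assert (Hin : is_derive (fun x => Derive u x ^ 2 + sinh (u x) ^ 2 * Derive v x ^ 2) t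
                    (2*A*A2 + (2*S*C*A*B^2 + S^2*(2*B*B2)))).
    { eapply isd_eq. apply isd_plus. apply (is_derive_pow _ 2), Hu'.
      apply isd_mult. apply HdS2. apply (is_derive_pow _ 2), Hv'.
      simpl. fold A B S. ring. }
    assert (Hds : is_derive (speed u v) t sd).
    { eapply isd_eq. apply (is_derive_sqrt _ _ _ Hin).
      unfold s, speed, der1 in Hspos. rewrite <- sqrt_0 in Hspos.
      apply sqrt_lt_0_alt in Hspos. exact Hspos.
      change (sqrt (Derive u t ^ 2 + sinh (u t) ^ 2 * Derive v t ^ 2)) with s.
      unfold sd. field. lra. }
    assert (Hd1 : is_derive (dL_du' alpha u v) t
                   (((alpha*p/u t*A*A + p*A2) * s - p*A*sd)/s^2)).
    { eapply isd_eq. eapply is_derive_ext.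
      2: apply (is_derive_div (fun x => Rpower (u x) alpha * Derive u x) (speed u v)).
      intros y; reflexivity.
      apply isd_mult. exact Hdp. exact Hu'. exact Hds. fold s; lra.
      fold s A p. reflexivity. }
    assert (Hd2 : is_derive (dL_dv' alpha u v) t
         (((alpha*p/u t*A*S^2*B + p*(2*S*C*A)*B + p*S^2*B2) * s - p*S^2*B*sd)/s^2)).
    { eapply isd_eq. eapply is_derive_ext.
      2: apply (is_derive_div (fun x => Rpower (u x) alpha * sinh (u x) ^ 2 * Derive v x) (speed u v)).
      intros y; reflexivity.
      apply isd_mult. apply isd_mult. exact Hdp. exact HdS2. exact Hv'. exact Hds. fold s; lra.
      cbv beta. fold s B p S. field. lra. }
    assert (HdLdu : dL_du alpha u v t = alpha*(p/u t)*s + p*S*C*B^2/s).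
    { unfold dL_du. rewrite Hpm. fold p s S C. unfold der1. fold B. ring. }
    destruct (alg1 alpha p (u t) A A2 B B2 S C s ltac:(lra) ltac:(lra) Hg) as [E1 E2].
    fold sd in E1, E2.
    set (K := (B*C*(2*A^2+B^2*S^2) + S*(A*B2 - A2*B))/s^3 - (-alpha*(B*S)/(u t*s))) in E1, E2.
    assert (HK : curvature u v t = - alpha * (der1 v t * S) / (u t * s)
                 <-> K = 0).
    { unfold curvature, der1, der2. fold A A2 B B2 S C s. unfold K. split; intros; lra. }
    rewrite HK. split.
    - intros [H1 H2].
      apply is_derive_unique in H1, H2, Hd1, Hd2.
      rewrite Hd1 in H1. rewrite Hd2 in H2.
      rewrite HdLdu in H1.
      assert (EB : p*S*B*K = 0) by lra.
      assert (EA : p*S*A*K = 0) by lra.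
      destruct (Req_dec K 0) as [|HK0]; auto.
      exfalso.
      assert (HB0 : B = 0).
      { apply (Rmult_eq_reg_r (p*S*K)). replace (B*(p*S*K)) with (p*S*B*K) by ring. lra.
        apply Rmult_integral_contrapositive_currified; [|exact HK0].
        apply Rmult_integral_contrapositive_currified; lra. }
      assert (HA0 : A = 0).
      { apply (Rmult_eq_reg_r (p*S*K)). replace (A*(p*S*K)) with (p*S*A*K) by ring. lra.
        apply Rmult_integral_contrapositive_currified; [|exact HK0].
        apply Rmult_integral_contrapositive_currified; lra. }
      assert (s^2 = 0) by (rewrite Hg, HA0, HB0; ring). 
      assert (0 < s^2) by (apply pow_lt; lra). lra.
    - intros HK0. split.
      + eapply isd_eq. exact Hd1. rewrite HdLdu. rewrite HK0 in E1. lra.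
      + eapply isd_eq. exact Hd2. rewrite E2, HK0. ring. }
  unfold alpha_stationary. split.
  - intros H t Ht. apply (Key t Ht). apply H, Ht.
  - intros H t Ht. apply (Key t Ht). apply H, Ht.
Qed.
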